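(* Let $m\ge1$, $k\ge1$, and let $d_0,\dots,d_{k-1}\in S$ be the coefficients of $t^0,\dots,t^{k-1}$ of $\det X(t)$ for the generic $m\times m$ matrix $X(t)$. With respect to the graded reverse lexicographic order described below, $\{d_0,\dots,d_{k-1}\}$ is a Gröbner basis of $\mathcal I^{m,m}_{m,k}$. Moreover, writing an index $0\le q\le k-1$ as $q=\lambda m+\mu$ with $0\le\mu\le m-1$, the leading monomial of $d_q$ is $$\prod_{i=1}^{m-\mu}x^{(\lambda)}_{i,\,m-\mu+1-i}\ \cdot\prod_{i=m-\mu+1}^{m}x^{(\lambda+1)}_{i,\,2m-\mu+1-i},$$ and the leading monomials of distinct $d_q$ involve disjoint sets of variables.
   Context: Let $F$ be an algebraically closed field, $S=F[x^{(l)}_{i,j}:1\le i,j\le m,\ 0\le l\le k-1]$, and $X(t)$ the $m\times m$ matrix over $S[t]/(t^k)$ with entries $x_{i,j}(t)=\sum_{l=0}^{k-1}x^{(l)}_{i,j}t^l$; every element of $S[t]/(t^k)$ is uniquely $\sum_{l=0}^{k-1}c_lt^l$, $c_l\in S$. $\mathcal I^{m,m}_{m,k}$ is the ideal of $S$ generated by the coefficients of all powers of $t$ of $\det X(t)$. The variables are totally ordered by: $x^{(l)}_{i,j}>x^{(l')}_{i',j'}$ iff $l>l'$, or $l=l'$ and $(i,j)$ precedes $(i',j')$ lexicographically (i.e. $x^{(k-1)}_{1,1}>x^{(k-1)}_{1,2}>\dots>x^{(k-1)}_{m,m}>x^{(k-2)}_{1,1}>\dots>x^{(0)}_{m,m}$).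 The graded reverse lexicographic (grevlex) order on monomials with respect to this variable order is: monomials are first compared by total degree; for equal total degree, $\alpha>\beta$ iff, listing variables from largest to smallest and viewing exponent vectors in $\mathbb Z^{km^2}$, the rightmost (i.e. smallest-variable) nonzero entry of $\alpha-\beta$ is negative. *)

(* Defs.v *)
From HB Require Import structures.
From mathcomp Require Import all_boot all_order all_algebra.
From mathcomp Require Import mpoly.
Set Implicit Arguments. Unset Strict Implicit. Unset Printing Implicit Defensive.
Import Order.TTheory GRing.Theory.
Local Open Scope ring_scope.

(* Variables x^{(l)}_{i,j} are indexed by triples v = (l, i, j) with
   l : 'I_k, i j : 'I_m (0-based indices: x^{(l)}_{i,j} of the paper is
   (l, i-1, j-1) here). *)
Definition vtriple (k m : nat) := ('I_k * 'I_m * 'I_m)%type.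
Definition nvars (k m : nat) : nat := #|{: vtriple k m}|.
Definition vidx (k m : nat) (v : vtriple k m) : 'I_(nvars k m) := enum_rank v.

Definition S (F : closedFieldType) (k m : nat) := {mpoly F[nvars k m]}.

Definition xvar (F : closedFieldType) (k m : nat) (v : vtriple k m) : S F k m :=
  'X_(vidx v).

Definition Xt (F : closedFieldType) (k m : nat) : 'M[{poly S F k m}]_m :=
  \matrix_(i < m, j < m) \sum_(l < k) (xvar F (l, i, j))%:P * 'X^l.

(* d_q = coefficient of t^q in det X(t); for q < k this is the same as the
   coefficient of t^q of det X(t) computed in S[t]/(t^k), since reduction
   modulo t^k is a ring morphism. *)
Definition dcoef (F : closedFieldType) (k m : nat) (q : nat) : S F k m :=
  (\det (Xt F k m))`_q.

Definition in_I (F : closedFieldType) (k m : nat) (f : S F k m) : Prop :=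
  exists c : 'I_k -> S F k m, f = \sum_(q < k) c q * dcoef F k m q.

Definition var_gt (k m : nat) (v w : vtriple k m) : bool :=
  let: (l, i, j) := v in let: (l', i', j') := w in
  (l' < l)%N || ((l == l') && ((i < i')%N || ((i == i') && (j < j')%N))).

Definition expo (k m : nat) (a : 'X_{1..nvars k m}) (v : vtriple k m) : nat :=
  a (vidx v).

Definition grevlex_gt (k m : nat) (a b : 'X_{1..nvars k m}) : Prop :=
  (mdeg b < mdeg a)%N \/
  (mdeg a = mdeg b /\
   exists v : vtriple k m, (expo a v < expo b v)%N /\
     forall w : vtriple k m, var_gt v w -> expo a w = expo b w).

Definition is_LM (F : closedFieldType) (k m : nat) (p : S F k m)
  (mm : 'X_{1..nvars k m}) : Prop :=
  mm \in msupp p /\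
  forall mm' : 'X_{1..nvars k m}, mm' \in msupp p -> mm' != mm -> grevlex_gt mm mm'.

Definition mdivides (n : nat) (a b : 'X_{1..n}) : Prop := forall i, (a i <= b i)%N.

Definition is_groebner_basis_d (F : closedFieldType) (k m : nat) : Prop :=
  (forall q : 'I_k, in_I (dcoef F k m q)) /\
  forall f : S F k m, in_I f -> f != 0 ->
    forall mf, is_LM f mf ->
      exists q : 'I_k, exists mq, is_LM (dcoef F k m q) mq /\ mdivides mq mf.

(* The claimed leading monomial of d_q, q = lambda*m + mu, 0 <= mu < m,
   written as the product of the variables v = (l,i,j) (0-based) with
     l = lambda,     i < m - mu,  i + j = m - mu - 1     (i.e. paper's
                      x^{(lambda)}_{i, m-mu+1-i}, 1 <= i <= m-mu), or
     l = lambda + 1, m - mu <= i, i + j = 2m - mu - 1    (paper's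
                      x^{(lambda+1)}_{i, 2m-mu+1-i}, m-mu+1 <= i <= m). *)
Definition in_claimed_LM (k m q : nat) (v : vtriple k m) : bool :=
  let lam := (q %/ m)%N in let mu := (q %% m)%N in
  let: (l, i, j) := v in
  [|| [&& (l == lam :> nat), (i < m - mu)%N & (i + j == m - mu - 1)%N]
    | [&& (l == lam.+1 :> nat), (m - mu <= i)%N & (i + j == 2 * m - mu - 1)%N]].

Definition claimed_LM (F : closedFieldType) (k m q : nat) : S F k m :=
  \prod_(v : vtriple k m | in_claimed_LM q v) xvar F v.

(* Main.v *)
Require Import Defs.
From HB Require Import structures.
From mathcomp Require Import all_boot all_order all_algebra.
From mathcomp Require Import mpoly.
From mathcomp Require Import fingroup perm.
From mathcomp Require Import zify.
Set Implicit Arguments. Unset Strict Implicit. Unset Printing Implicit Defensive.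
Import Order.TTheory GRing.Theory.
Local Open Scope ring_scope.

Section Order.
Variables k m : nat.
Local Notation V := (vtriple k m).
Local Notation M := ('X_{1..nvars k m}).
Local Open Scope nat_scope.

Definition vkey (v : V) : nat :=
  let: (l, i, j) := v in ((l * m + (m.-1 - i)) * m + (m.-1 - j))%N.

Lemma lexlt (x y d1 d2 b : nat) : (d1 < b)%N -> (d2 < b)%N ->
  (x * b + d1 < y * b + d2)%N = (x < y)%N || ((x == y) && (d1 < d2)%N).
Proof.
move=> h1 h2; case: (ltngtP x y) => hxy /=.
- apply/idP; have : (x.+1 * b <= y * b)%N by rewrite leq_mul2r hxy orbT.
  rewrite mulSn; lia.
- apply/negbTE; have : (y.+1 * b <= x * b)%N by rewrite leq_mul2r hxy orbT.
  rewrite mulSn; lia.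
- by rewrite hxy ltn_add2l.
Qed.

Lemma lexeq (x y d1 d2 b : nat) : (d1 < b)%N -> (d2 < b)%N ->
  (x * b + d1 == y * b + d2) = (x == y) && (d1 == d2).
Proof.
move=> h1 h2; apply/eqP/andP => [e|[/eqP-> /eqP->]//].
have e2 : d1 = d2.
  have := f_equal (fun z => z %% b) e; rewrite /= !modnMDl !modn_small //.
split; apply/eqP=> //; move: e; rewrite e2 => /addIn /eqP.
rewrite eqn_mul2r; case/orP=> [/eqP hb|/eqP //]; lia.
Qed.

Lemma var_gtE (v w : V) : var_gt v w = (vkey w < vkey v)%N.
Proof.
case: v => [[l i] j]; case: w => [[l' i'] j'] /=.
have hi := ltn_ord i; have hj := ltn_ord j; have hi' := ltn_ord i'; have hj' := ltn_ord j'.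
have a1 : (m.-1 - j < m) by lia.
have a2 : (m.-1 - j' < m) by lia.
have a3 : (m.-1 - i < m) by lia.
have a4 : (m.-1 - i' < m) by lia.
rewrite lexlt // lexeq // lexlt // -!val_eqE /=.
have -> : (m.-1 - i' == m.-1 - i) = (i == i' :> nat) by apply/eqP/eqP; lia.
have -> : (m.-1 - i' < m.-1 - i)%N = (i < i')%N by apply/idP/idP; lia.
have -> : (m.-1 - j' < m.-1 - j)%N = (j < j')%N by apply/idP/idP; lia.
by rewrite (@eq_sym nat l) andb_orr andbA orbA.
Qed.

Lemma vkey_inj : injective vkey.
Proof.
move=> [[l i] j] [[l' i'] j'] /= /eqP h.
have hi := ltn_ord i; have hj := ltn_ord j; have hi' := ltn_ord i'; have hj' := ltn_ord j'.
have a1 : (m.-1 - j < m) by lia.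
have a2 : (m.-1 - j' < m) by lia.
have a3 : (m.-1 - i < m) by lia.
have a4 : (m.-1 - i' < m) by lia.
move: h; rewrite lexeq // lexeq // => /andP [/andP [/eqP e1 /eqP e2] /eqP e3].
congr (_, _, _); apply/val_inj => /=; lia.
Qed.

Definition gtb (a b : M) : bool :=
  (mdeg b < mdeg a)%N || ((mdeg a == mdeg b) &&
  [exists v : V, (expo a v < expo b v)%N &&
    [forall w : V, var_gt v w ==> (expo a w == expo b w)]]).

Lemma grevlexP a b : grevlex_gt a b <-> gtb a b.
Proof.
rewrite /grevlex_gt /gtb; split.
- case=> [->//|[/eqP -> [v [h1 h2]]]]; apply/orP; right; apply/andP; split=> //.
  apply/existsP; exists v; rewrite h1 /=; apply/forallP => w; apply/implyP => /h2 ->.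
  by [].
- case/orP=> [h|/andP [/eqP h /existsP [v /andP [h1 /forallP h2]]]]; [by left|right].
  split=> //; exists v; split=> // w hw; apply/eqP; exact: (implyP (h2 w) hw).
Qed.

Lemma gtb_irr a : gtb a a = false.
Proof.
rewrite /gtb ltnn /=; apply/negbTE; rewrite negb_and eqxx /=.
by apply/existsPn => v; rewrite ltnn.
Qed.

Lemma gtb_deg a b : gtb a b -> (mdeg b <= mdeg a)%N.
Proof. by case/orP=> [/ltnW//|/andP [/eqP -> _]]. Qed.

Lemma gtb_trans b a c : gtb a b -> gtb b c -> gtb a c.
Proof.
rewrite /gtb.
case/orP=> [h1|/andP [/eqP e1 /existsP [v1 /andP [h1 /forallP h1']]]];
case/orP=> [h2|/andP [/eqP e2 /existsP [v2 /andP [h2 /forallP h2']]]].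
- by rewrite (ltn_trans h2 h1).
- by rewrite -e2 h1.
- by rewrite e1 h2.
apply/orP; right; rewrite e1 e2 eqxx /=; apply/existsP.
case: (ltngtP (vkey v1) (vkey v2)) => hk.
- exists v1; have := implyP (h2' v1); rewrite var_gtE hk => /(_ isT) /eqP <-.
  rewrite h1 /=; apply/forallP=> w; apply/implyP=> hw.
  rewrite (eqP (implyP (h1' w) hw)); apply: (implyP (h2' w)).
  by rewrite var_gtE; rewrite var_gtE in hw; apply: ltn_trans hk.
- exists v2; have := implyP (h1' v2); rewrite var_gtE hk => /(_ isT) /eqP ->.
  rewrite h2 /=; apply/forallP=> w; apply/implyP=> hw.
  have hw1 : var_gt v1 w by rewrite var_gtE; rewrite var_gtE in hw; apply: ltn_trans hw hk.
  by rewrite (eqP (implyP (h1' w) hw1)) (eqP (implyP (h2' w) hw)).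
- have e := vkey_inj hk; subst v2.
  exists v1; rewrite (ltn_trans h1 h2) /=; apply/forallP=> w; apply/implyP=> hw.
  by rewrite (eqP (implyP (h1' w) hw)) (eqP (implyP (h2' w) hw)).
Qed.

Lemma expo_inj (a b : M) : (forall v, expo a v = expo b v) -> a = b.
Proof.
move=> h; apply/mnmP => x; have := h (enum_val x).
by rewrite /expo /vidx enum_valK.
Qed.

Lemma min_diff (a b : M) : a != b -> exists v : V, expo a v != expo b v /\
  forall w, var_gt v w -> expo a w = expo b w.
Proof.
move=> nab.
have [v0 hv0] : exists v0, expo a v0 != expo b v0.
  apply/existsP; apply: contraR nab => /existsPn h; apply/eqP/expo_inj => v.
  by apply/eqP; move: (h v); rewrite negbK.
case: (@arg_minnP _ v0 (fun v => expo a v != expo b v) vkey hv0) => v hv hmin; exists v; split=> // w hw.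
apply/eqP; apply: contraTT hw => hw; rewrite var_gtE -leqNgt; exact: hmin.
Qed.

Lemma gtb_total a b : mdeg a = mdeg b -> a != b -> gtb a b || gtb b a.
Proof.
move=> hd nab; case: (min_diff nab) => v [h1 h2].
rewrite /gtb hd eqxx ltnn /=.
case: (ltngtP (expo a v) (expo b v)) h1 => //= h _.
- apply/orP; left; apply/existsP; exists v; rewrite h /=.
  by apply/forallP=> w; apply/implyP=> /h2 ->.
- apply/orP; right; apply/existsP; exists v; rewrite h /=.
  by apply/forallP=> w; apply/implyP=> /h2 ->.
Qed.

Lemma gtb_total' a b : a != b -> gtb a b || gtb b a.
Proof.
move=> nab; case: (ltngtP (mdeg a) (mdeg b)) => h.
- by rewrite /gtb h orbT.
- by rewrite /gtb h.
- exact: gtb_total.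
Qed.

Lemma expoD (a b : M) v : expo (a + b)%MM v = (expo a v + expo b v)%N.
Proof. by rewrite /expo mnmDE. Qed.

Lemma gtb_add a b c : gtb a b -> gtb (a + c)%MM (b + c)%MM.
Proof.
rewrite /gtb !mdegD ltn_add2r eqn_add2r.
case/orP=> [->//|/andP [-> /existsP [v /andP [h1 /forallP h2]]]].
apply/orP; right; apply/existsP; exists v; rewrite !expoD ltn_add2r h1 /=.
apply/forallP=> w; apply/implyP=> hw; rewrite !expoD eqn_add2r.
exact: (implyP (h2 w)).
Qed.

Definition geb a b := (a == b) || gtb a b.

Lemma geb_add a b c : geb a b -> geb (a + c)%MM (b + c)%MM.
Proof. by rewrite /geb; case/orP=> [/eqP->|/(gtb_add c) ->]; rewrite ?eqxx ?orbT. Qed.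

Lemma geb_gtb_trans b a c : geb a b -> gtb b c -> gtb a c.
Proof. by case/orP=> [/eqP->//|h1 h2]; apply: gtb_trans h1 h2. Qed.
Lemma gtb_geb_trans b a c : gtb a b -> geb b c -> gtb a c.
Proof. by move=> h1 /orP [/eqP<-//|h2]; apply: gtb_trans h1 h2. Qed.
Lemma geb_trans b a c : geb a b -> geb b c -> geb a c.
Proof.
case/orP=> [/eqP->//|h1] h2; apply/orP; right; exact: gtb_geb_trans h1 h2.
Qed.

Lemma geb_antisym a b : geb a b -> geb b a -> a = b.
Proof.
case/orP=> [/eqP//|h1] /orP [/eqP//|h2].
by have := gtb_trans h1 h2; rewrite gtb_irr.
Qed.

Lemma geb_addE a b a' b' : geb a a' -> geb b b' -> (a + b)%MM = (a' + b')%MM ->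
  a = a' /\ b = b'.
Proof.
move=> h1 h2 e.
have ha : a = a'.
  apply/eqP; apply: contraT => ne; have g1 : gtb a a' by case/orP: h1 => [/eqP e0|//]; rewrite e0 eqxx in ne.
  have h3 : geb (a+b)%MM (a+b')%MM by rewrite ![(a + _)%MM]addmC; apply: geb_add.
  by have := geb_gtb_trans h3 (gtb_add b' g1); rewrite -e gtb_irr.
split=> //; subst a'; exact: (addmI e).
Qed.

Lemma gtb_ind (P : M -> Prop) :
  (forall a, (forall b, gtb a b -> P b) -> P a) -> forall a, P a.
Proof.
move=> IH a0.
pose B := (mdeg a0).+1.
pose rk (a : M) := #|[pred b : bmultinom (nvars k m) B | gtb a (bmnm b)]|.
suff : forall n a, (mdeg a < B)%N -> (rk a <= n)%N -> P a by apply; rewrite ?ltnSn.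
elim=> [|n IHn] a ha hr; apply: IH => b hb;
  have hbB : (mdeg b < B)%N by apply: leq_ltn_trans (gtb_deg hb) ha.
- pose b' : bmultinom (nvars k m) B := BMultinom hbB.
  have : (0 < rk a)%N by apply/card_gt0P; exists b'.
  by rewrite leqn0 in hr; rewrite (eqP hr).
- apply: IHn => //; rewrite -ltnS; apply: leq_trans hr.
  pose b' : bmultinom (nvars k m) B := BMultinom hbB.
  apply: proper_card; apply/properP; split.
    by apply/subsetP=> x; rewrite !inE => /(gtb_trans hb).
  by exists b'; rewrite !inE /= ?gtb_irr.
Qed.

End Order.


Section GB.
Variable F : closedFieldType.
Variables k m : nat.
Local Notation M := ('X_{1..nvars k m}).
Local Notation P := {mpoly F[nvars k m]}.
Local Notation gtb := (@gtb k m).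
Local Notation geb := (@geb k m).

Definition le_all (p : P) (a : M) := forall b, p@_b != 0 -> geb a b.
Definition top (p : P) (a : M) := p@_a != 0 /\ le_all p a.

Lemma le_all0 a : le_all 0 a.
Proof. by move=> b; rewrite mcoeff0 eqxx. Qed.

Lemma le_allD p q a : le_all p a -> le_all q a -> le_all (p + q) a.
Proof.
move=> hp hq b; rewrite mcoeffD; case: (eqVneq (p@_b) 0) => [->|/hp//].
by rewrite add0r => /hq.
Qed.

Lemma le_allN p a : le_all p a -> le_all (- p) a.
Proof. by move=> hp b; rewrite mcoeffN oppr_eq0 => /hp. Qed.

Lemma le_allB p q a : le_all p a -> le_all q a -> le_all (p - q) a.
Proof. by move=> hp hq; apply: le_allD => //; apply: le_allN. Qed.

Lemma le_allZ c p a : le_all p a -> le_all (c *: p) a.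
Proof. by move=> hp b; rewrite mcoeffZ; case: (eqVneq (p@_b) 0) => [->|/hp//]; rewrite mulr0 eqxx. Qed.

Lemma le_allMn p a (b : bool) : le_all p a -> le_all (b%:R * p) a.
Proof. by case: b => hp; rewrite ?mul1r ?mul0r //; apply: le_all0. Qed.

Lemma le_all_sum (I : finType) (G : I -> P) a :
  (forall i, le_all (G i) a) -> le_all (\sum_i G i) a.
Proof.
move=> h; elim/big_rec: _ => [|i p _ hp]; [exact: le_all0|exact: le_allD].
Qed.

Lemma le_allX a : le_all 'X_[a] a.
Proof. by move=> b; rewrite mcoeffX /geb; case: (a == b); rewrite /= ?eqxx. Qed.

Lemma coefE (r : P) c : r@_c = \sum_(x <- msupp r) r@_x * (x == c)%:R.
Proof.
rewrite {1}(mpolyE r) raddf_sum; apply: eq_bigr => x _; by rewrite /= mcoeffZ mcoeffX.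
Qed.

Lemma mcoeff_sum (I : finType) (G : I -> P) b : (\sum_i G i)@_b = \sum_i (G i)@_b.
Proof. exact: raddf_sum. Qed.

Lemma le_allM p q a b : le_all p a -> le_all q b -> le_all (p * q) (a + b)%MM.
Proof.
move=> hp hq x; rewrite mcoeff_eq0 negbK => /msuppM_le /allpairsP [[m1 m2] /= [h1 h2 ->]].
rewrite mcoeff_msupp in h1; rewrite mcoeff_msupp in h2.
apply: (@geb_trans _ _ (m1 + b)%MM); first exact: geb_add (hp _ h1).
rewrite ![(m1 + _)%MM]addmC; exact: geb_add (hq _ h2).
Qed.

Lemma coefM_top p q a b : le_all p a -> le_all q b ->
  (p * q)@_(a + b) = p@_a * q@_b.
Proof.
move=> hp hq.
rewrite (coefE p a) (coefE q b) big_distrlr /=.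
rewrite {1}(mpolyE p) {1}(mpolyE q) big_distrlr raddf_sum; apply: eq_big_seq => m1 h1.
rewrite raddf_sum; apply: eq_big_seq => m2 h2 /=.
rewrite -scalerAl -scalerAr scalerA -mpolyXD mcoeffZ mcoeffX.
rewrite mcoeff_msupp in h1; rewrite mcoeff_msupp in h2.
have -> : ((m1 + m2)%MM == (a + b)%MM) = (m1 == a) && (m2 == b).
  apply/eqP/andP => [e|[/eqP-> /eqP->]//].
  by have [-> ->] := geb_addE (hp _ h1) (hq _ h2) (esym e).
by case: (m1 == a); case: (m2 == b); rewrite /= ?mulr1 ?mulr0 ?mul0r.
Qed.

Lemma seq_max (r : seq M) : r != [::] -> exists2 a, a \in r & forall b, b \in r -> geb a b.
Proof.
elim: r => [//|x r IH] _; case: (eqVneq r [::]) => [->|/IH [a ha hm]].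
  by exists x; rewrite ?mem_seq1 // => b; rewrite mem_seq1 => /eqP->; rewrite /geb eqxx.
case/orP: (orbN (geb a x)) => h.
- exists a; first by rewrite in_cons ha orbT.
  by move=> b; rewrite in_cons => /orP [/eqP->//|/hm].
- exists x; first by rewrite in_cons eqxx.
  have gx : gtb x a.
    case: (eqVneq a x) h => [->|ne]; first by rewrite /geb eqxx.
    by case/orP: (gtb_total' ne) => [g|//]; rewrite /geb g orbT.
  move=> b; rewrite in_cons => /orP [/eqP->|/hm hb]; first by rewrite /geb eqxx.
  by rewrite /geb (gtb_geb_trans gx hb) orbT.
Qed.

Lemma exists_top p : p != 0 -> exists a, top p a.
Proof.
rewrite -msupp_eq0 => /seq_max [a ha hm]; exists a; split; first by rewrite -mcoeff_msupp.
by move=> b hb; apply: hm; rewrite mcoeff_msupp.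
Qed.

Lemma exists_bound s (G : 'I_s -> P) : exists d, (forall i, le_all (G i) d) /\
  ((exists i, G i != 0) -> exists i, (G i)@_d != 0).
Proof.
pose r := flatten [seq msupp (G i) | i <- enum 'I_s].
have memr b i : (G i)@_b != 0 -> b \in r.
  move=> h; apply/flattenP; exists (msupp (G i)); last by rewrite mcoeff_msupp.
  by apply/mapP; exists i; rewrite ?mem_enum.
case: (eqVneq r [::]) => [r0|/seq_max [d hd hm]].
  exists 0%MM; split=> [i b /memr|[i]]; first by rewrite r0.
  by case/exists_top=> a [/memr]; rewrite r0.
exists d; split=> [i b /memr/hm//|_].
case/flattenP: hd => x /mapP [i _ ->] hx; exists i; by rewrite -mcoeff_msupp.
Qed.


Lemma top_prod_split c g d T : le_all (c * g) d -> (c * g)@_d != 0 -> top g T ->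
  exists u, top c u /\ d = (u + T)%MM.
Proof.
move=> hle hnz [gT hg].
have c0 : c != 0 by apply: contraNneq hnz => ->; rewrite mul0r mcoeff0.
case: (exists_top c0) => u [cu hc]; exists u; split=> //.
have h1 : le_all (c * g) (u + T)%MM by apply: le_allM.
have h2 : (c * g)@_(u + T) != 0 by rewrite coefM_top // mulf_neq0.
exact: geb_antisym (hle _ h2) (h1 _ hnz).
Qed.

Lemma sum_delta s (G : 'I_s -> P) i0 : \sum_t (t == i0)%:R * G t = G i0.
Proof.
rewrite (bigD1 i0) //= eqxx mul1r big1 ?addr0 // => t /negbTE ->; by rewrite mul0r.
Qed.

Lemma gb_coprime s (g : 'I_s -> P) (T : 'I_s -> M)
  (hT : forall i, top (g i) (T i))
  (hdisj : forall i j, i != j -> forall x : 'I_(nvars k m), T i x = 0%N \/ T j x = 0%N)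
  (cs : 'I_s -> P) (mf : M) :
  top (\sum_i cs i * g i) mf -> exists i, (T i <= mf)%MM.
Proof.
set f := \sum_i cs i * g i => -[hf0 hfle].
suff H : forall d (c1 : 'I_s -> P), (forall i, le_all (c1 i * g i) d) ->
    \sum_i c1 i * g i = f -> exists i, (T i <= mf)%MM.
  case: (exists_bound (fun i => cs i * g i)) => d [hd _]; exact: H d cs hd erefl.
elim/gtb_ind => d IHd.
have case1 : forall c, (forall i, le_all (c i * g i) d) -> \sum_i c i * g i = f ->
    f@_d != 0 -> exists i, (T i <= mf)%MM.
  move=> c hle hsum hfd.
  have hfle' : le_all f d by rewrite -hsum; apply: le_all_sum.
  have emf : mf = d by apply: geb_antisym (hfle _ hfd) (hfle' _ hf0).
  have [i hi] : exists i, (c i * g i)@_d != 0.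
    apply/existsP; apply: contraNT hfd => /existsPn h.
    rewrite -hsum mcoeff_sum big1 // => i _; apply/eqP; move: (h i); by rewrite negbK.
  case: (top_prod_split (hle i) hi (hT i)) => u [_ edu].
  by exists i; rewrite emf edu lem_addl.
have case2 : forall c, (forall i, le_all (c i * g i) d) -> \sum_i c i * g i = f ->
    [set t | (c t * g t)@_d != 0] = set0 -> exists i, (T i <= mf)%MM.
  move=> c hle hsum hA0.
  have hz : forall t, (c t * g t)@_d = 0.
    move=> t; apply/eqP; apply: contraT => ht.
    have : t \in [set t | (c t * g t)@_d != 0] by rewrite inE.
    by rewrite hA0 inE.
  case: (exists_bound (fun t => c t * g t)) => d' [hd' hd'nz].
  case: hd'nz => [|j hj].
    apply/existsP; apply: contraNT hf0 => /existsPn h.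
    rewrite -hsum big1 ?mcoeff0 // => t _; apply/eqP; move: (h t); by rewrite negbK.
  have gd : gtb d d'.
    case/orP: (hle j _ hj) => [/eqP e|//]; by move: hj; rewrite -e hz eqxx.
  exact: IHd gd c hd' hsum.
move=> c0; move: {2}#|[set t | (c0 t * g t)@_d != 0]| (leqnn #|[set t | (c0 t * g t)@_d != 0]|).
move=> n; elim: n c0 => [|n IHn] c hA hle hsum.
  by apply: (case2 c hle hsum); apply/eqP; rewrite -cards_eq0 -leqn0.
case: (eqVneq (f@_d) 0) => hfd; last exact: case1 c hle hsum hfd.
case: (eqVneq [set t | (c t * g t)@_d != 0] set0) => hA0; first exact: case2 c hle hsum hA0.
case/set0Pn: hA0 => i; rewrite inE => hi.
have [j hj hij] : exists2 j, (c j * g j)@_d != 0 & j != i.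
  case: (boolP [exists j, ((c j * g j)@_d != 0) && (j != i)]) =>
     [/existsP [j /andP [h1 h2]]|/existsPn h]; first by exists j.
  exfalso; move: hi; rewrite (_ : (c i * g i)@_d = 0) ?eqxx //.
  move: hfd; rewrite -hsum mcoeff_sum (bigD1 i) //= big1 ?addr0 // => t ht.
  by apply/eqP; move: (h t); rewrite ht andbT negbK.
case: (top_prod_split (hle i) hi (hT i)) => ui [_ edi].
case: (top_prod_split (hle j) hj (hT j)) => uj [[cuj hcj] edj].
have [giT hgi] := hT i; have [gjT hgj] := hT j.
have Tuj : (T i <= uj)%MM.
  apply/mnm_lepP => x; have : (T i <= d)%MM by rewrite edi lem_addl.
  move/mnm_lepP/(_ x); rewrite edj mnmDE.
  case: (hdisj i j (negbT (introF eqP (fun e => (negP hij) (introT eqP (esym e))))) x) => ->; lia.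
set w := (uj - T i)%MM.
have ew : uj = (w + T i)%MM by rewrite submK.
set kap := (c j)@_uj / (g i)@_(T i).
set pij := kap *: ('X_[w] * g i).
have hpij : le_all pij uj by rewrite ew; apply/le_allZ/le_allM => //; exact: le_allX.
have cpij : pij@_uj = (c j)@_uj.
  rewrite mcoeffZ {1}ew coefM_top //; last exact: le_allX.
  by rewrite mcoeffX eqxx mul1r /kap divfK.
set E := pij * g j.
have hE : le_all E d by rewrite edj; apply: le_allM.
pose c' := fun t => c t + (t == i)%:R * (kap *: ('X_[w] * g j)) - (t == j)%:R * pij.
have ec' : forall t, c' t * g t = c t * g t + (t == i)%:R * E - (t == j)%:R * E.
  have e1 : kap *: ('X_[w] * g j) * g i = E.
    by rewrite /E /pij -!scalerAl -!mulrA [g j * _]mulrC.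
  move=> t; rewrite /c' !mulrDl mulNr -!mulrA.
  have -> : (t == i)%:R * (kap *: ('X_[w] * g j) * g t) = (t == i)%:R * E.
    by case: (eqVneq t i) => [->|_]; rewrite ?e1 ?mul0r.
  have -> : (t == j)%:R * (pij * g t) = (t == j)%:R * E.
    by case: (eqVneq t j) => [->|_]; rewrite ?mul0r.
  by [].
apply: (IHn c').
- rewrite -ltnS; apply: leq_trans hA; apply: proper_card; apply/properP; split.
    apply/subsetP=> t; rewrite !inE ec'.
    case: (eqVneq t i) => [->//|ti]; case: (eqVneq t j) => [->//|tj].
    by rewrite !mul0r subr0 addr0.
  exists j; rewrite !inE ?hj //= ec' (negbTE hij) mul0r addr0 eqxx mul1r negbK.
  rewrite -mulrBl edj; apply/eqP; rewrite coefM_top //.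
    by rewrite mcoeffB cpij subrr mul0r.
  exact: (le_allB hcj hpij).
- move=> t; rewrite ec'; apply: le_allB; first apply: le_allD.
  + exact: hle.
  + exact: le_allMn hE.
  + exact: le_allMn hE.
- rewrite -hsum; under eq_bigr => t _ do rewrite ec'.
by rewrite sumrB big_split /= !sum_delta addrK.
Qed.

End GB.


Section Det.
Variable F : closedFieldType.
Variables k m : nat.
Local Notation M := ('X_{1..nvars k m}).
Local Notation P := {mpoly F[nvars k m]}.
Local Notation V := (vtriple k m).

Definition mono (s : 'S_m) (L : {ffun 'I_m -> 'I_k}) : M :=
  (\sum_(i < m) U_(vidx ((L i, i, s i) : V)))%MM.

Lemma vidx_eq (v w : V) : (vidx v == vidx w) = (v == w).
Proof. by rewrite /vidx (inj_eq enum_rank_inj). Qed.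

Lemma expo_mono s L (l : 'I_k) (i j : 'I_m) :
  expo (mono s L) (l, i, j) = ((L i == l) && (s i == j)) :> nat.
Proof.
rewrite /expo /mono mnm_sumE (bigD1 i) //= mnm1E vidx_eq big1 ?addn0.
  by rewrite !xpair_eqE eqxx andbT.
move=> t ti; rewrite mnm1E vidx_eq !xpair_eqE.
by rewrite (negbTE ti) andbF.
Qed.

Lemma mdeg_mono s L : mdeg (mono s L) = m.
Proof.
rewrite /mono mdeg_sum; under eq_bigr => i _ do rewrite mdeg1.
by rewrite sum_nat_const card_ord muln1.
Qed.

Lemma mono_injS s L s' L' : mono s L = mono s' L' -> s = s' /\ L = L'.
Proof.
move=> e.
have h i : L' i = L i /\ s' i = s i.
  have := expo_mono s' L' (L i) i (s i); rewrite -e expo_mono !eqxx /=.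
  by case: eqP => // -> ; case: eqP.
split; [apply/permP|apply/ffunP] => i; by case: (h i).
Qed.

Lemma dcoefE q : dcoef F k m q = \sum_(s : 'S_m) \sum_(L : {ffun 'I_m -> 'I_k})
  ((-1) ^+ s * 'X_[mono s L]) *+ ((\sum_i (L i : nat))%N == q).
Proof.
rewrite /dcoef /determinant coef_sum; apply: eq_bigr => s _.
rewrite -(rmorph_sign polyC) coefCM.
under eq_bigr => i _ do rewrite /Xt mxE.
rewrite bigA_distr_bigA coef_sum mulr_sumr; apply: eq_bigr => L _.
rewrite big_split /= -rmorph_prod prodrXr coefCM coefXn.
rewrite /xvar mprodXE -/(mono s L) mulrA mulr_natr eq_sym.
by [].
Qed.

End Det.


Lemma var_gtN k m (l0 l : 'I_k) (r i c0 j : 'I_m) :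
  var_gt ((l0, r, c0) : vtriple k m) (l, i, j) =
  (l < l0)%N || ((l0 == l :> nat) && ((r < i)%N || ((r == i :> nat) && (c0 < j)%N))).
Proof. by []. Qed.

Lemma sum_eq_pointwise n (f g : 'I_n -> nat) : (forall i, f i <= g i)%N ->
  (\sum_i f i = \sum_i g i)%N -> forall i, f i = g i.
Proof.
move=> h e i; apply/eqP; rewrite eqn_leq h /=; apply: contraT; rewrite -ltnNge => lt.
have : (\sum_j f j < \sum_j g j)%N.
  rewrite (bigD1 i) //= [X in (_ < X)%N](bigD1 i) //=.
  rewrite -addSn; apply: leq_add => //; apply: leq_sum => j _; exact: h.
by rewrite e ltnn.
Qed.

Section Comb.
Variables k m : nat.
Variable q : 'I_k.
Hypothesis mpos : (0 < m)%N.
Local Notation M := ('X_{1..nvars k m}).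
Local Notation V := (vtriple k m).
Local Open Scope nat_scope.

Definition lam := q %/ m.
Definition mu := q %% m.
Definition pp := m - mu.

Definition Lval (i : nat) := if i < pp then lam else lam.+1.
Definition svalq (i : nat) := if i < pp then pp.-1 - i else (m + pp).-1 - i.

Lemma qE : (q : nat) = lam * m + mu.
Proof. exact: divn_eq. Qed.

Lemma Lval_lt (i : 'I_m) : Lval i < k.
Proof.
have hi := ltn_ord i; have hq := ltn_ord q.
have hmu : mu < m by rewrite ltn_mod; lia.
have := qE; rewrite /Lval /pp; case: ifP => h1 e; nia.
Qed.

Lemma sval_lt (i : 'I_m) : svalq i < m.
Proof.
have hi := ltn_ord i.
have hmu : mu < m by rewrite ltn_mod; lia.
rewrite /svalq /pp; case: ifP => h1; lia.
Qed.

Definition sfun (i : 'I_m) : 'I_m := Ordinal (sval_lt i).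

Lemma sfun_inj : injective sfun.
Proof.
move=> i j /(congr1 val) /=; have hi := ltn_ord i; have hj := ltn_ord j.
have hmu : mu < m by rewrite ltn_mod; lia.
rewrite /svalq /pp => e; apply/val_inj => /=.
move: e; case: ifP => h1; case: ifP => h2; lia.
Qed.

Definition sst : 'S_m := perm sfun_inj.
Definition Lst : {ffun 'I_m -> 'I_k} := [ffun i => Ordinal (Lval_lt i)].
Definition Mst : M := mono sst Lst.

Lemma sstE i : (sst i : nat) = svalq i.
Proof. by rewrite /sst permE. Qed.
Lemma LstE i : (Lst i : nat) = Lval i.
Proof. by rewrite /Lst ffunE. Qed.

Lemma sum_Lst : \sum_i (Lst i : nat) = q.
Proof.
have hq := ltn_ord q.
have hmu : mu < m by rewrite ltn_mod.
under eq_bigr => i _ do rewrite LstE.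
rewrite -(big_mkord xpredT Lval) (big_cat_nat _ (leq_subr mu m)) //=.
rewrite (eq_big_nat _ _ (F2 := fun _ => lam)); last first.
  by move=> i /andP [_ h]; rewrite /Lval /pp h.
rewrite [X in _ + X](eq_big_nat _ _ (F2 := fun _ => lam.+1)); last first.
  by move=> i /andP [h _]; rewrite /Lval /pp ltnNge h.
rewrite !sum_nat_const_nat qE /pp; nia.
Qed.

Lemma comb (s : 'S_m) (L : {ffun 'I_m -> 'I_k}) :
  \sum_i (L i : nat) = q -> mono s L != Mst -> gtb Mst (mono s L).
Proof.
move=> hsum ne.
have hq := ltn_ord q.
rewrite /gtb !mdeg_mono ltnn eqxx /=.
rewrite eq_sym in ne.
case: (min_diff ne) => v [hv hbelow]; apply/existsP; exists v.
rewrite [X in _ && X](_ : _ = true); last first.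
  by apply/forallP => w; apply/implyP => /hbelow ->.
rewrite andbT.
case: v hv hbelow => [[l0 r] c0]; rewrite /Mst !expo_mono => hv hbelow.
have b01 (b : bool) : (b : nat) <= 1 by case: b.
suff : ~ ((Lst r == l0) && (sst r == c0) /\ ~~ ((L r == l0) && (s r == c0))).
  move: hv; case: ((Lst r == l0) && (sst r == c0)); case: ((L r == l0) && (s r == c0)) => //=.
  by move=> _ []; split.
case=> /andP [/eqP hl0 /eqP hc0] nmem.
have hmu : mu < m by rewrite ltn_mod.
have nmem' : ~ ((L r : nat) = l0 /\ (s r : nat) = c0).
  by case=> e1 e2; move/negP: nmem; apply; rewrite -!val_eqE /= e1 e2 !eqxx.
have H1 : forall i, var_gt ((l0, r, c0) : V) (L i, i, s i) ->
    (Lst i : nat) = L i /\ (sst i : nat) = s i.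
  move=> i /hbelow; rewrite !expo_mono !eqxx /=.
  by case: eqP => [->|//]; case: eqP => [->|].
have Flow : forall i, L i < l0 -> Lval i = L i /\ svalq i = s i.
  by move=> i h; rewrite -LstE -sstE; apply: H1; rewrite var_gtN h.
have Fafter : forall i, (L i : nat) = l0 -> r < i -> Lval i = L i /\ svalq i = s i.
  by move=> i h1 h2; rewrite -LstE -sstE; apply: H1; rewrite var_gtN h1 eqxx h2 orbT.
have Frow : (L r : nat) = l0 -> c0 < s r -> svalq r = s r.
  by move=> h1 h2; rewrite -sstE; apply: (proj2 (H1 r _)); rewrite var_gtN h1 !eqxx h2 !orbT.
have sinj : forall i j : 'I_m, (s i : nat) = s j -> i = j.
  by move=> i j /val_inj /perm_inj.
have ex_ord : forall x, x < m -> exists i : 'I_m, (i : nat) = x.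
  by move=> x hx; exists (Ordinal hx).
have {hl0} hl0 : Lval r = l0 by rewrite -LstE hl0.
have {hc0} hc0 : svalq r = c0 by rewrite -sstE hc0.
have Lge : (forall i : 'I_m, Lval i <= L i) -> forall i : 'I_m, (L i : nat) = Lval i.
  move=> h i; apply: esym; apply: (@sum_eq_pointwise _ (fun i => Lval i) (fun i => L i)) => //.
  by rewrite hsum -sum_Lst; apply: eq_bigr => j _; rewrite LstE.
move: hl0 hc0; rewrite /Lval /svalq /pp; case: ltnP => hr hl0 hc0.
-
  have hLe : forall i : 'I_m, (L i : nat) = Lval i.
    apply: Lge => i; case: (ltnP (L i) lam) => h.
      by have [e _] := Flow i (ltac:(lia)); move: e; rewrite /Lval; case: (ltnP i (m - mu)); lia.
    rewrite /Lval /pp; case: ltnP => hi; first lia.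
    case: (eqVneq (L i : nat) lam) => e; last lia.
    have [e' _] := Fafter i (ltac:(lia)) (ltac:(lia)); move: e'; rewrite /Lval /pp; case: (ltnP i (m - mu)); lia.
  have hLr : (L r : nat) = l0 by rewrite hLe /Lval /pp hr.
  have hsr : s r < c0.
    case: (ltngtP (s r) c0) => // h; first by have := Frow hLr h; rewrite /svalq /pp hr; lia.
    by exfalso; apply: nmem'; split.
  have [i hi] := ex_ord ((m - mu).-1 - s r) (ltac:(lia)).
  have [_ e] := Fafter i (ltac:(rewrite hLe /Lval /pp; case: (ltnP i (m - mu)); lia)) (ltac:(lia)).
  move: e; rewrite /svalq /pp; case: ltnP => hip e; last lia.
  have := sinj i r (ltac:(lia)); move=> eir; move: hi; rewrite eir; lia.
-
  have hLe : forall i : 'I_m, (L i : nat) = Lval i.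
    apply: Lge => i; case: (ltnP (L i) lam) => h.
      by have [e _] := Flow i (ltac:(lia)); move: e; rewrite /Lval; case: (ltnP i (m - mu)); lia.
    rewrite /Lval /pp; case: ltnP => hi; first lia.
    case: (eqVneq (L i : nat) lam) => e; last lia.
    have [e' _] := Flow i (ltac:(lia)); move: e'; rewrite /Lval /pp; case: (ltnP i (m - mu)); lia.
  have hLr : (L r : nat) = l0 by rewrite hLe /Lval /pp; case: (ltnP r (m - mu)); lia.
  have hsr : s r < c0.
    case: (ltngtP (s r) c0) => // h; first by have := Frow hLr h; rewrite /svalq /pp; case: (ltnP r (m - mu)); lia.
    by exfalso; apply: nmem'; split.
  have hsr' := ltn_ord (s r); have hr' := ltn_ord r.
  case: (ltnP (s r) (m - mu)) => hsp.
  + have [i hi] := ex_ord ((m - mu).-1 - s r) (ltac:(lia)).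
    have [_ e] := Flow i (ltac:(rewrite hLe /Lval /pp; case: (ltnP i (m - mu)); lia)).
    move: e; rewrite /svalq /pp; case: ltnP => hip e; last lia.
    have := sinj i r (ltac:(lia)); move=> eir; move: hi hip; rewrite eir; lia.
  + have [i hi] := ex_ord ((m + (m - mu)).-1 - s r) (ltac:(lia)).
    have [_ e] := Fafter i (ltac:(rewrite hLe /Lval /pp; case: (ltnP i (m - mu)); lia)) (ltac:(lia)).
    move: e; rewrite /svalq /pp; case: ltnP => hip e; first lia.
    have := sinj i r (ltac:(lia)); move=> eir; move: hi; rewrite eir; lia.
Qed.

End Comb.


Section Final.
Variable F : closedFieldType.
Variables k m : nat.
Hypothesis mpos : (0 < m)%N.
Local Notation M := ('X_{1..nvars k m}).
Local Notation P := {mpoly F[nvars k m]}.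
Local Notation V := (vtriple k m).

Lemma mcoeff_sign n (p : P) x : ((-1) ^+ n * p)@_x = (-1) ^+ n * p@_x.
Proof.
elim: n => [|n IH]; first by rewrite !expr0 !mul1r.
by rewrite !exprS -!mulrA !mulN1r mcoeffN IH.
Qed.

Lemma coef_dcoef q x : (dcoef F k m q)@_x = \sum_(s : 'S_m) \sum_(L : {ffun 'I_m -> 'I_k})
  ((-1) ^+ s * (mono s L == x)%:R) *+ ((\sum_i (L i : nat))%N == q).
Proof.
rewrite dcoefE raddf_sum; apply: eq_bigr => s _; rewrite raddf_sum; apply: eq_bigr => L _.
by rewrite /= mcoeffMn mcoeff_sign mcoeffX.
Qed.

Lemma top_dcoef (q : 'I_k) : top (dcoef F k m q) (Mst q mpos).
Proof.
split.
- rewrite coef_dcoef (bigD1 (sst q mpos)) //= (bigD1 (Lst q mpos)) //= eqxx sum_Lst eqxx.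
  rewrite mulr1 mulr1n big1 ?addr0.
    rewrite big1 ?addr0 ?signr_eq0 // => s ns; apply: big1 => L _.
    case: eqP => [e|_]; last by rewrite mulr0 mul0rn.
    by have [es _] := mono_injS e; rewrite es eqxx in ns.
  move=> L nL; case: eqP => [e|_]; last by rewrite mulr0 mul0rn.
  by have [_ eL] := mono_injS e; rewrite eL eqxx in nL.
- move=> b hb.
  case: (boolP [exists s, exists L, (mono s L == b) && ((\sum_i (L i : nat))%N == q)]) =>
      [/existsP [s /existsP [L /andP [/eqP e /eqP hs]]]|/existsPn h].
    rewrite -e /geb; case: (eqVneq (Mst q mpos) (mono s L)) => [->|ne]; first by rewrite ?eqxx.
    by rewrite (comb hs) ?orbT // eq_sym.
  exfalso; move/eqP: hb; apply; rewrite coef_dcoef big1 // => s _; apply: big1 => L _.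
  move/existsPn: (h s) => /(_ L); case: eqP => [_|_]; last by rewrite mulr0 mul0rn.
  by rewrite andbC; case: eqP => //= _ _; rewrite mulr0n.
Qed.

Lemma is_LM_top (p : P) a : is_LM p a <-> top p a.
Proof.
split.
- case=> h1 h2; split; first by rewrite -mcoeff_msupp.
  move=> b hb; rewrite /geb; case: (eqVneq a b) => [//|ne].
  by apply/orP; right; apply/grevlexP; apply: h2; rewrite ?mcoeff_msupp // eq_sym.
- case=> h1 h2; split; first by rewrite mcoeff_msupp.
  move=> b hb ne; apply/grevlexP; rewrite mcoeff_msupp in hb.
  by case/orP: (h2 _ hb) => [/eqP e|//]; rewrite e eqxx in ne.
Qed.

Lemma top_uniq (p : P) a b : top p a -> top p b -> a = b.
Proof. by case=> h1 h2 [h3 h4]; apply: geb_antisym (h2 _ h3) (h4 _ h1). Qed.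

Lemma Mst_disj (q q' : 'I_k) : q != q' -> forall v : V,
  expo (Mst q mpos) v = 0%N \/ expo (Mst q' mpos) v = 0%N.
Proof.
move=> nq [[l i] j]; rewrite /Mst !expo_mono.
case: (boolP ((Lst q mpos i == l) && (sst q mpos i == j))) => h1; last by left.
case: (boolP ((Lst q' mpos i == l) && (sst q' mpos i == j))) => h2; last by right.
exfalso; move/negP: nq; apply; apply/eqP/val_inj.
move: h1 h2; rewrite -!val_eqE /= !LstE !sstE /Lval /svalq /pp.
have hmu : (mu m q < m)%N by rewrite /mu ltn_mod.
have hmu' : (mu m q' < m)%N by rewrite /mu ltn_mod.
have hi := ltn_ord i; have hj := ltn_ord j.
have := qE m q; have := qE m q'.
move: (lam m q) (mu m q) (lam m q') (mu m q') hmu hmu' => a b a' b' hb hb' E' E.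
case: (ltnP i (m - b)) => c1; case: (ltnP i (m - b')) => c2;
  move=> /andP [/eqP e1 /eqP e2] /andP [/eqP e3 /eqP e4];
  (have eb : b = b' by lia); subst b'; (have ea : a = a' by lia); subst a'; lia.
Qed.

End Final.


Lemma claimed_iff k m (hm : (0 < m)%N) (q : 'I_k) (l : 'I_k) (i j : 'I_m) :
  in_claimed_LM q ((l, i, j) : vtriple k m) = (Lst q hm i == l) && (sst q hm i == j).
Proof.
rewrite /in_claimed_LM -!val_eqE /= LstE sstE /Lval /svalq /pp.
have hmu : (mu m q < m)%N by rewrite /mu ltn_mod.
have hi := ltn_ord i; have hj := ltn_ord j.
rewrite -/(lam m q) -/(mu m q).
move: (lam m q) (mu m q) hmu => a b hb.
case: (ltnP i (m - b)) => c1; apply/idP/idP => h; lia.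
Qed.

Theorem theorem3p2 (F : closedFieldType) (m k : nat) (hm : (1 <= m)%N) (hk : (1 <= k)%N) :
  is_groebner_basis_d F k m /\
  (forall q : 'I_k, exists mq, is_LM (dcoef F k m q) mq /\ 'X_[mq] = claimed_LM F k m q) /\
  (forall (q q' : 'I_k) mq mq', q != q' ->
     is_LM (dcoef F k m q) mq -> is_LM (dcoef F k m q') mq' ->
     forall v : vtriple k m, expo mq v = 0%N \/ expo mq' v = 0%N).
Proof.
split; [split|split].
- move=> q; exists (fun t => (t == q)%:R).
  by rewrite (sum_delta (fun t => dcoef F k m t)).
- move=> f [c ->] f0 mf /is_LM_top hmf.
  have hdisj : forall i j : 'I_k, i != j -> forall x : 'I_(nvars k m),
      Mst i hm x = 0%N \/ Mst j hm x = 0%N.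
    move=> i j nij x; have := Mst_disj hm nij (enum_val x).
    by rewrite /expo /vidx enum_valK.
  have [q hq] := gb_coprime (g := fun q => dcoef F k m q) (T := fun q => Mst q hm)
    (fun q => top_dcoef F hm q) hdisj hmf.
  exists q, (Mst q hm); split; first exact/is_LM_top/top_dcoef.
  exact/mnm_lepP.
- move=> q; exists (Mst q hm); split; first exact/is_LM_top/top_dcoef.
  rewrite /claimed_LM /xvar mprodXE; congr 'X_[_]; apply: expo_inj => v.
  case: v => [[l i] j]; rewrite /Mst expo_mono {1}/expo mnm_sumE.
  rewrite (eq_bigr (fun w => ((w == ((l, i, j) : vtriple k m)) : nat))); last first.
    by move=> w _; rewrite mnm1E vidx_eq.
  rewrite -claimed_iff; case: (boolP (in_claimed_LM q ((l, i, j) : vtriple k m))) => h.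
    rewrite (bigD1 ((l, i, j) : vtriple k m)) //= eqxx big1 ?addn0 //.
    by move=> w /andP [_ /negbTE ->].
  rewrite big1 // => w hw; apply/eqP; rewrite eqb0; apply: contraNneq h => <-; exact: hw.
- move=> q q' mq mq' nq h1 h2 v.
  have e1 := top_uniq (proj1 (is_LM_top _ _) h1) (top_dcoef F hm q).
  have e2 := top_uniq (proj1 (is_LM_top _ _) h2) (top_dcoef F hm q').
  by rewrite e1 e2; apply: Mst_disj.
Qed.
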